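(* Let $C$ be a finite set of $m$ candidates, $N=\{1,\dots,n\}$ voters with weak orders $\succcurlyeq_1,\dots,\succcurlyeq_n$ over $C$, and $k$ a positive integer. Consider the matrix $A$ whose columns are indexed by variables $x_{i,\ell,r}$ ($i\in N,\ell\in[k],r\in[m]$) and $y_c$ ($c\in C$), with one row for $\sum_{c\in C}y_c=k$ (entry $1$ at each $y_c$) and, for each $i\in N,r\in[m]$, one row for $\sum_{\ell\in[k]}x_{i,\ell,r}-\sum_{c:\ \mathrm{rank}_i(c)\le r}y_c\le0$ (entries $1$ at $x_{i,\ell,r}$ for all $\ell$, $-1$ at $y_c$ for $\mathrm{rank}_i(c)\le r$, $0$ elsewhere). If the profile is single-peaked, then $A$ is totally unimodular.
   Context: A weak order partitions $C$ into indifference classes $A_1\succ\dots\succ A_r$; a candidate in $A_t$ has rank $t$ (rank 1 = most preferred). A top-initial segment is a set $\{x:\mathrm{rank}(x)\le t\}$. A profile is single-peaked if there is a linear order (axis) of $C$ such that every top-initial segment of every voter's order is an interval of the axis. A matrix is totally unimodular if every square submatrix has determinant in $\{-1,0,1\}$. $A$ is the constraint matrix of (OWA-IP), ignoring variable bounds. *)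

(* Defs.v *)
From HB Require Import structures.
From mathcomp Require Import all_boot all_order all_algebra.
Set Implicit Arguments. Unset Strict Implicit. Unset Printing Implicit Defensive.
Import Order.TTheory GRing.Theory Num.Theory.

(* A weak order over C: a complete and transitive relation; pref x y = "x ≽ y". *)
Definition weak_order (C : finType) (pref : rel C) : Prop :=
  (forall x y, pref x y || pref y x) /\
  (forall x y z, pref x y -> pref y z -> pref x z).

Definition indiff_class (C : finType) (pref : rel C) (y : C) : {set C} :=
  [set z | pref z y && pref y z].

Definition rank (C : finType) (pref : rel C) (x : C) : nat :=
  #|[set indiff_class pref y | y in [set y | pref y x && ~~ pref x y]]|.+1.

Definition axis_interval (C : finType) (pos : C -> nat) (S : pred C) : Prop :=
  forall a b c, S a -> S c -> pos a <= pos b <= pos c -> S b.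

(* single-peaked profile: some linear order (axis) of C makes every
   top-initial segment of every voter an interval *)
Definition single_peaked (C : finType) (n : nat) (P : 'I_n -> rel C) : Prop :=
  exists pos : C -> nat, injective pos /\
    forall (i : 'I_n) (t : nat),
      axis_interval pos (fun x => rank (P i) x <= t).

Definition totally_unimodular (Rw Cl : finType) (M : Rw -> Cl -> int) : Prop :=
  forall (s : nat) (f : 'I_s -> Rw) (g : 'I_s -> Cl),
    injective f -> injective g ->
    (\det (\matrix_(a, b) M (f a) (g b)))%R \in [:: (-1)%R; 0%R; 1%R].

(* Constraint matrix of (OWA-IP).  Columns: inl (i, l, r) is x_{i,l,r+1},
   inr c is y_c.  Rows: None is sum_c y_c = k; Some (i, r) is the row
   sum_l x_{i,l,r+1} - sum_{c : rank_i c <= r+1} y_c <= 0. *)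
Definition owa_matrix (C : finType) (n k : nat) (P : 'I_n -> rel C)
  (row : option ('I_n * 'I_#|C|)) (col : ('I_n * 'I_k * 'I_#|C|) + C) : int :=
  match row, col with
  | None, inl _ => 0%R
  | None, inr _ => 1%R
  | Some (i, r), inl (i', _, r') => if (i' == i) && (r' == r) then 1%R else 0%R
  | Some (i, r), inr c => if rank (P i) c <= r.+1 then (-1)%R else 0%R
  end.
Arguments owa_matrix C n k P row col : clear implicits.

(* Main.v *)
Require Import Defs.
From HB Require Import structures.
From mathcomp Require Import all_boot all_order all_algebra.
Import Order.TTheory GRing.Theory Num.Theory.
Module Helpers.
Set Implicit Arguments. Unset Strict Implicit.
Local Open Scope ring_scope.
Definition okz (x : int) := x \in [:: (-1)%R; 0%R; 1%R].

Lemma okzM x y : okz x -> okz y -> okz (x * y).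
Proof.
rewrite /okz !inE => /or3P [] /eqP -> /or3P [] /eqP -> //=.
Qed.

Lemma okz_sign k : okz ((-1) ^+ k).
Proof. by rewrite /okz !inE; rewrite -signr_odd; case: (odd k); rewrite eqxx ?orbT. Qed.

Definition good s (M : 'M[int]_s) (isx : 'I_s -> bool) (pos : 'I_s -> nat) :=
 [/\ forall a b, M a b = 0 \/ M a b = 1,
     forall a a' b, isx b -> M a b = 1 -> M a' b = 1 -> a = a'
   & forall a b1 b2 b3, ~~ isx b1 -> ~~ isx b2 -> ~~ isx b3 ->
       (pos b1 <= pos b2)%N -> (pos b2 <= pos b3)%N -> M a b1 = 1 -> M a b3 = 1 -> M a b2 = 1].

Definition ones s (M : 'M[int]_s) := [set ab : 'I_s * 'I_s | M ab.1 ab.2 == 1].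

Lemma good_minor n (M : 'M[int]_n.+1) isx pos i j :
  good M isx pos -> good (row' i (col' j M)) (isx \o lift j) (pos \o lift j).
Proof.
case=> H1 H2 H3; split => [a b|a a' b|a b1 b2 b3]; rewrite ?mxE /=.
- exact: H1.
- move=> hx e1 e2; exact: lift_inj (H2 _ _ _ hx e1 e2).
- exact: H3.
Qed.
Lemma diff1 (x y : int) : (x = 0 \/ x = 1) -> (y = 0 \/ y = 1) -> x - y = 1 -> x = 1 /\ y = 0.
Proof. by case=> ->; case=> -> /eqP. Qed.

Lemma step n (IHn : forall (M : 'M[int]_n) isx pos, good M isx pos -> okz (\det M))
  (M : 'M[int]_n.+1) isx pos : good M isx pos ->
  (forall (M' : 'M[int]_n.+1) isx' pos', good M' isx' pos' -> (#|ones M'| < #|ones M|)%N -> okz (\det M')) ->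
  okz (\det M).
Proof.
have caseA : forall (M : 'M[int]_n.+1) isx pos j, good M isx pos ->
   (forall a a', M a j = 1 -> M a' j = 1 -> a = a') -> okz (\det M).
{ move=> M0 isx0 pos0 j g0 uj.
  rewrite (expand_det_col _ j).
  case: (pickP (fun a => M0 a j == 1)) => [a /eqP Ha|none].
  - rewrite (bigD1 a) //= big1 ?addr0.
    + rewrite Ha mul1r /cofactor; apply: okzM; first exact: okz_sign.
      exact: IHn _ _ _ (good_minor a j g0).
    + move=> i ia. case: g0 => H1 _ _. case: (H1 i j) => [->|e]; first by rewrite mul0r.
      by move: ia; rewrite (uj _ _ e Ha) eqxx.
  - rewrite big1 ?/okz ?inE //. move=> i _. case: g0 => H1 _ _; case: (H1 i j) => [->|e]; first by rewrite mul0r.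
    by move: (none i); rewrite e eqxx. }
move=> gM IH.
case: (boolP [exists j, [forall a, forall a', (M a j == 1) ==> (M a' j == 1) ==> (a == a')]]) => [/existsP [j /forallP hj]|].
  apply: (caseA _ _ _ j gM) => a a' e e'. move: (hj a) => /forallP /(_ a').
  by rewrite e e' eqxx /= => /eqP.
rewrite negb_exists => /forallP hB.
have hB' : forall j, exists a a', [/\ a != a', M a j = 1 & M a' j = 1].
  move=> j; move: (hB j); rewrite negb_forall => /existsP [a]; rewrite negb_forall => /existsP [a'].
  by rewrite !negb_imply => /andP [/eqP e /andP [/eqP e' ne]]; exists a, a'.
have noX : forall j, ~~ isx j.
  move=> j; apply/negP => xj; case: (hB' j) => a [a' [ne e e']]; case: gM => _ H2 _.
  by move: ne; rewrite (H2 _ _ _ xj e e') eqxx.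
case: gM => H1 H2 H3.
pose c0 := [arg min_(j < (ord0 : 'I_n.+1)) pos j]%N.
have c0min : forall j, (pos c0 <= pos j)%N.
  by rewrite /c0; case: arg_minnP => // j0 _ h j; exact: h.
have [a1 [a2 [ne12 e1 e2]]] := hB' c0.
pose cnt a := #|[set b | M a b == 1]|.
pose r0 := [arg min_(a < a1 | M a c0 == 1) cnt a]%N.
have [r0c0 r0min] : M r0 c0 = 1 /\ forall a, M a c0 = 1 -> (cnt r0 <= cnt a)%N.
  rewrite /r0; case: arg_minnP; first by rewrite e1.
  by move=> r /eqP hr h; split=> // a /eqP; exact: h.
have [i [ir0 ic0]] : exists i, i != r0 /\ M i c0 = 1.
  case: (eqVneq a1 r0) => [E|]; last by exists a1.
  by exists a2; split=> //; rewrite -E eq_sym.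
have sub : forall b, M r0 b = 1 -> M i b = 1.
  move=> b rb; case: (H1 i b) => // ib0; exfalso.
  have lt : forall d, M i d = 1 -> (pos d < pos b)%N.
    move=> d id; rewrite ltnNge; apply/negP => le.
    have := H3 i c0 b d (noX _) (noX _) (noX _) (c0min b) le ic0 id.
    by rewrite ib0 => /eqP; rewrite eq_sym oner_eq0.
  have : (cnt i < cnt r0)%N.
    apply: proper_card; apply/properP; split.
    - apply/subsetP => d; rewrite !inE => /eqP id; apply/eqP.
      exact: H3 r0 c0 d b (noX _) (noX _) (noX _) (c0min d) (ltnW (lt d id)) r0c0 rb.
    - by exists b; rewrite !inE ?rb ?ib0.
  by rewrite ltnNge r0min.
pose M' := \matrix_(a, b) (if a == i then M i b - M r0 b else M a b).
have detE : \det M' = \det M.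
  pose C := \matrix_(a, b) (if a == i then M r0 b else M a b).
  have := @determinant_multilinear _ _ M' M C i 1 (-1).
  rewrite (determinant_alternate (A:=C) ir0); last by move=> b; rewrite !mxE eqxx eq_sym (negbTE ir0).
  rewrite mulr0 addr0 mul1r; apply.
  - by apply/rowP => b; rewrite !mxE eqxx mul1r mulN1r.
  - apply/matrixP => a b; rewrite !mxE.
    have -> : (lift i a == i) = false by apply/negbTE; rewrite eq_sym neq_lift.
    by [].
  - apply/matrixP => a b; rewrite !mxE.
    have -> : (lift i a == i) = false by apply/negbTE; rewrite eq_sym neq_lift.
    by [].
rewrite -detE.
apply: (IH M' isx pos).
  split.
  - move=> a b; rewrite mxE; case: eqP => _ ; last exact: H1.
    case: (H1 r0 b) => e; first by rewrite e subr0; exact: H1.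
    by rewrite e (sub _ e) subrr; left.
  - by move=> a a' b xb; move: (noX b); rewrite xb.
  - move=> a b1 b2 b3 x1 x2 x3 l12 l23; rewrite !mxE; case: eqP => _; last exact: H3.
    move=> /(diff1 (H1 _ _) (H1 _ _)) [ib1 rb1] /(diff1 (H1 _ _) (H1 _ _)) [ib3 rb3].
    have ib2 := H3 i _ _ _ x1 x2 x3 l12 l23 ib1 ib3.
    rewrite ib2; case: (H1 r0 b2) => e; first by rewrite e subr0.
    have := H3 r0 c0 b1 b2 (noX _) x1 x2 (c0min _) l12 r0c0 e.
    by rewrite rb1 => /eqP; rewrite eq_sym oner_eq0.
apply: proper_card; apply/properP; split.
  apply/subsetP => [[a b]]; rewrite !inE /= mxE; case: (a =P i) => [->|_] //.
  by move=> /eqP /(diff1 (H1 _ _) (H1 _ _)) [-> _].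
by exists (i, c0); rewrite !inE /= ?mxE ?eqxx ?ic0 ?r0c0 ?subrr.
Qed.

Lemma main n : forall (M : 'M[int]_n) isx pos, good M isx pos -> okz (\det M).
Proof.
elim: n => [|n IHn] M isx pos gM; first by rewrite det_mx00 /okz !inE.
suff: forall m (M : 'M[int]_n.+1) isx pos, (#|ones M| <= m)%N -> good M isx pos -> okz (\det M).
  by move/(_ _ M isx pos (leqnn _) gM).
clear M isx pos gM.
elim=> [|m IHm] M isx pos cM gM; apply: (step IHn gM) => M' isx' pos' gM' lt.
  by move: (leq_trans lt cM).
by apply: (IHm _ _ _ _ gM'); rewrite -ltnS (leq_trans lt cM).
Qed.
End Helpers.
Import Helpers.

Theorem mainTheorem7 (C : finType) (n k : nat) (P : 'I_n -> rel C) :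
  0 < k ->
  (forall i, weak_order (P i)) ->
  single_peaked P ->
  totally_unimodular (owa_matrix C n k P).
Proof.
move=> _ _ [posC [_ hsp]] s f g injf _.
pose d1 := (\row_(a < s) (if f a is None then -1 else 1 : int))%R.
pose d2 := (\row_(b < s) (if g b is inr _ then -1 else 1 : int))%R.
pose N := (\matrix_(a, b) owa_matrix C n k P (f a) (g b))%R.
pose N' := (diag_mx d1 *m N *m diag_mx d2)%R.
have N'E : forall a b, N' a b = (d1 0 a * N a b * d2 0 b)%R.
  by move=> a b; rewrite /N' mul_diag_mx mul_mx_diag !mxE.
have N'v : forall a b, N' a b = match f a, g b with
   | None, inl _ => 0%R
   | None, inr _ => 1%R
   | Some (i, r), inl (i', _, r') => if (i' == i) && (r' == r) then 1%R else 0%R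
   | Some (i, r), inr c => if (rank (P i) c <= r.+1)%N then 1%R else 0%R
   end.
  move=> a b; rewrite N'E !mxE /owa_matrix.
  case: (f a) => [[i r]|]; case: (g b) => [[[i' l] r']|c] //=; try case: ifP => _ //.
have gN' : good N' (fun b => if g b is inl _ then true else false)
    (fun b => if g b is inr c then posC c else 0%N).
  split.
  - move=> a b; rewrite N'v; case: (f a) => [[i r]|]; case: (g b) => [[[i' l] r']|c] //=;
      try case: ifP => _; by [left|right].
  - move=> a a' b; case E: (g b) => [[[i' l] r']|c] // _; rewrite !N'v E.
    case Ea: (f a) => [[i r]|] //; case Ea': (f a') => [[j q]|] //.
    case: ifP => // /andP [/eqP e1 /eqP e2] _; case: ifP => // /andP [/eqP e3 /eqP e4] _.
    by apply: injf; rewrite Ea Ea' -e1 -e2 -e3 -e4.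
  - move=> a b1 b2 b3; rewrite !N'v.
    case: (g b1) => [//|c1]; case: (g b2) => [//|c2]; case: (g b3) => [//|c3] _ _ _ l12 l23.
    case: (f a) => [[i r]|] //.
    case: ifP => // h1 _; case: ifP => // h3 _.
    by rewrite (hsp i r.+1 c1 c2 c3 h1 h3) // l12 l23.
have := main gN'.
rewrite /N' !det_mulmx !det_diag.
set p1 := (\prod_i d1 0 i)%R; set p2 := (\prod_i d2 0 i)%R.
have dk : forall (d : 'rV[int]_s), (forall i, d 0 i = -1 \/ d 0 i = 1)%R ->
    okz (\prod_i d 0 i)%R /\ (\prod_i d 0 i * \prod_i d 0 i = 1)%R.
  move=> d hd; split.
    apply: (big_ind okz) => //; first exact: okzM.
    by move=> i _; case: (hd i) => ->.
  apply: (big_ind (fun x => x * x = 1)%R); first by rewrite mulr1.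
    by move=> x y hx hy; rewrite mulrACA hx hy mulr1.
  by move=> i _; case: (hd i) => ->; rewrite ?mulrNN mulr1.
have [ok1 sq1] := dk d1 (fun i => ltac:(rewrite mxE; case: (f i) => [?|]; by [left|right])).
have [ok2 sq2] := dk d2 (fun i => ltac:(rewrite mxE; case: (g i) => ?; by [left|right])).
move=> h.
have -> : (\det (\matrix_(a, b) owa_matrix C n k P (f a) (g b)) = p1 * (p1 * \det N * p2) * p2)%R.
  by rewrite /p1 /p2 !mulrA sq1 mul1r -mulrA sq2 mulr1.
exact: (okzM (okzM ok1 h) ok2).
Qed.
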